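(* The locus of the Nagel point $X_8$ (triangle center function $h=\dfrac{s_2+s_3-s_1}{s_1}$) over the 3-periodics of $E$ is the ellipse $x^2/a_8^2+y^2/b_8^2=1$ with $a_8=\dfrac{(b^2-\delta)^2}{a\,c^2}$, $b_8=\dfrac{(a^2-\delta)^2}{b\,c^2}$.
   Context: Fix real numbers $a>b>0$, let $E$ be the ellipse $x^2/a^2+y^2/b^2=1$, $c^2=a^2-b^2$ and $\delta=\sqrt{a^4-a^2b^2+b^4}$. A 3-periodic is a non-degenerate triangle $P_1P_2P_3$ with all vertices on $E$ such that at each vertex $P_j$ the normal line to $E$ at $P_j$ bisects the interior angle of the triangle at $P_j$. For a triangle let $s_1=|P_2P_3|$, $s_2=|P_3P_1|$, $s_3=|P_1P_2|$. Given a triangle center function $h(s_1,s_2,s_3)$, the center $X_h$ is the point with trilinears $p:q:r=h(s_1,s_2,s_3):h(s_2,s_3,s_1):h(s_3,s_1,s_2)$, i.e. the Cartesian point $\dfrac{p s_1P_1+q s_2P_2+r s_3P_3}{p s_1+q s_2+r s_3}$. The locus of $X_h$ is the set of points $X_h(T)$ over all 3-periodics $T$. *)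

(* Defs.v *)
From Stdlib Require Import Reals.
Open Scope R_scope.

Definition pt := (R * R)%type.

Definition on_ellipse (a b : R) (P : pt) : Prop :=
  (fst P)^2 / a^2 + (snd P)^2 / b^2 = 1.

Definition dist (P Q : pt) : R :=
  sqrt ((fst P - fst Q)^2 + (snd P - snd Q)^2).

Definition cross3 (P Q S : pt) : R :=
  (fst Q - fst P) * (snd S - snd P) - (snd Q - snd P) * (fst S - fst P).

Definition non_degenerate (P1 P2 P3 : pt) : Prop := cross3 P1 P2 P3 <> 0.

(* The normal line to E at P (direction (x/a^2, y/b^2)) is parallel to the
   interior angle bisector at P of the angle QPS, whose direction is
   u_Q + u_S, u_Q, u_S the unit vectors from P towards Q and S. *)
Definition normal_bisects (a b : R) (P Q S : pt) : Prop :=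
  let nx := fst P / a^2 in
  let ny := snd P / b^2 in
  let wx := (fst Q - fst P) / dist P Q + (fst S - fst P) / dist P S in
  let wy := (snd Q - snd P) / dist P Q + (snd S - snd P) / dist P S in
  nx * wy - ny * wx = 0.

Definition three_periodic (a b : R) (P1 P2 P3 : pt) : Prop :=
  non_degenerate P1 P2 P3 /\
  on_ellipse a b P1 /\ on_ellipse a b P2 /\ on_ellipse a b P3 /\
  normal_bisects a b P1 P2 P3 /\ normal_bisects a b P2 P3 P1 /\
  normal_bisects a b P3 P1 P2.

(* Triangle center with trilinears h(s1,s2,s3) : h(s2,s3,s1) : h(s3,s1,s2),
   as the Cartesian point (p s1 P1 + q s2 P2 + r s3 P3)/(p s1 + q s2 + r s3). *)
Definition center (h : R -> R -> R -> R) (P1 P2 P3 : pt) : pt :=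
  let s1 := dist P2 P3 in
  let s2 := dist P3 P1 in
  let s3 := dist P1 P2 in
  let p := h s1 s2 s3 in
  let q := h s2 s3 s1 in
  let r := h s3 s1 s2 in
  let w := p * s1 + q * s2 + r * s3 in
  ((p * s1 * fst P1 + q * s2 * fst P2 + r * s3 * fst P3) / w,
   (p * s1 * snd P1 + q * s2 * snd P2 + r * s3 * snd P3) / w).

Definition nagel_h (s1 s2 s3 : R) : R := (s2 + s3 - s1) / s1.

Definition locus (a b : R) (h : R -> R -> R -> R) (X : pt) : Prop :=
  exists P1 P2 P3 : pt, three_periodic a b P1 P2 P3 /\ center h P1 P2 P3 = X.

Definition delta (a b : R) : R := sqrt (a^4 - a^2 * b^2 + b^4).
Definition csq (a b : R) : R := a^2 - b^2.

(* Main.v *)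
From Stdlib Require Import Reals Lra Psatz.
From Coquelicot Require Import Complex.
Require Import Defs.
Open Scope R_scope.

Lemma pow_lt_sq x : x <> 0 -> 0 < x^2.
Proof. intros. nra. Qed.

Definition gg (c1 s1 c2 s2 : R) : R := 1 - (c1*c2 + s1*s2).
Definition QQ (a b c1 s1 c2 s2 : R) : R :=
  (a^2+b^2)/2 - (a^2-b^2)/2*(c1*c2 - s1*s2).

Lemma unitD a b c1 s1 c2 s2 : c1^2+s1^2 = 1 -> c2^2+s2^2 = 1 ->
  a^2*(c1-c2)^2 + b^2*(s1-s2)^2 = 2 * gg c1 s1 c2 s2 * QQ a b c1 s1 c2 s2.
Proof.
  intros H1 H2. unfold gg, QQ.
  apply Rminus_diag_uniq.
  transitivity ((a^2 - a^2*c2^2 + b^2*c2^2)*(c1^2+s1^2-1) + (a^2*s1^2 + b^2 - b^2*s1^2)*(c2^2+s2^2-1)).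
  field. rewrite H1, H2. ring.
Qed.

Lemma gg_alt c1 s1 c2 s2 : c1^2+s1^2 = 1 -> c2^2+s2^2 = 1 ->
  gg c1 s1 c2 s2 = ((c1-c2)^2 + (s1-s2)^2)/2.
Proof. intros H1 H2. unfold gg. nra. Qed.

Lemma gg_pos c1 s1 c2 s2 : c1^2+s1^2 = 1 -> c2^2+s2^2 = 1 ->
  (c1, s1) <> (c2, s2) -> 0 < gg c1 s1 c2 s2.
Proof.
  intros H1 H2 Hne. rewrite gg_alt by auto.
  destruct (Req_dec c1 c2) as [e1|e1]; destruct (Req_dec s1 s2) as [e2|e2].
  - subst; congruence.
  - assert (0 < (s1-s2)^2) by (apply pow_lt_sq; lra). nra.
  - assert (0 < (c1-c2)^2) by (apply pow_lt_sq; lra). nra.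
  - assert (0 < (c1-c2)^2) by (apply pow_lt_sq; lra). nra.
Qed.

Lemma bis_alg nx ny ux uy vx vy : ux^2+uy^2=1 -> vx^2+vy^2=1 -> ux*vy - uy*vx <> 0 ->
 (nx*(uy+vy) - ny*(ux+vx) = 0 <-> nx*ux+ny*uy = nx*vx+ny*vy).
Proof.
  intros Hu Hv Hc.
  set (mx := ux - vx). set (my := uy - vy). set (wx := ux+vx). set (wy := uy+vy).
  assert (Hmw : mx*wx + my*wy = 0) by (unfold mx,my,wx,wy; nra).
  assert (I1 : (nx*mx+ny*my)*(wx*wx+wy*wy) = (nx*wx+ny*wy)*(mx*wx+my*wy) + (nx*wy-ny*wx)*(mx*wy-my*wx)) by ring.
  assert (I2 : (nx*wy-ny*wx)*(mx*mx+my*my) = (nx*mx+ny*my)*(mx*wy-my*wx) + (nx*my-ny*mx)*(wx*mx+wy*my)) by ring.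
  split; intro H.
  - assert (Hw : wx*wx+wy*wy <> 0).
    { intro H0. assert (wx = 0) by nra. assert (wy = 0) by nra.
      apply Hc. unfold wx, wy in *. replace vx with (-ux) by lra. replace vy with (-uy) by lra. ring. }
    fold wy wx in H. rewrite Hmw, H in I1.
    assert (nx*mx+ny*my = 0).
    { apply (Rmult_eq_reg_r (wx*wx+wy*wy)); auto. lra. }
    unfold mx, my in *. lra.
  - assert (Hm : mx*mx+my*my <> 0).
    { intro H0. assert (mx = 0) by nra. assert (my = 0) by nra.
      apply Hc. unfold mx, my in *. replace vx with ux by lra. replace vy with uy by lra. ring. }
    assert (Hn : nx*mx+ny*my = 0) by (unfold mx, my; lra).
    rewrite Hn in I2. rewrite (Rmult_comm wx mx), (Rmult_comm wy my), Hmw in I2.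
    assert (nx*wy-ny*wx = 0).
    { apply (Rmult_eq_reg_r (mx*mx+my*my)); auto. lra. }
    unfold wx, wy in *. lra.
Qed.

Lemma dist_sq P Q : dist P Q ^ 2 = (fst P - fst Q)^2 + (snd P - snd Q)^2.
Proof. unfold dist. rewrite pow2_sqrt. reflexivity.
  apply Rplus_le_le_0_compat; apply pow2_ge_0. Qed.

Lemma dist_pos P Q : P <> Q -> 0 < dist P Q.
Proof.
  intro H. unfold dist. apply sqrt_lt_R0.
  destruct P as [px py], Q as [qx qy]; simpl.
  destruct (Req_dec px qx); destruct (Req_dec py qy).
  - subst; congruence.
  - assert (0 < (py-qy)^2) by (apply pow_lt_sq; lra). nra.
  - assert (0 < (px-qx)^2) by (apply pow_lt_sq; lra). nra.
  - assert (0 < (px-qx)^2) by (apply pow_lt_sq; lra). nra.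
Qed.

Lemma bis_geom a b P Q S : 0 < dist P Q -> 0 < dist P S -> cross3 P Q S <> 0 ->
  (normal_bisects a b P Q S <->
   (fst P / a^2 * (fst Q - fst P) + snd P / b^2 * (snd Q - snd P)) / dist P Q =
   (fst P / a^2 * (fst S - fst P) + snd P / b^2 * (snd S - snd P)) / dist P S).
Proof.
  intros HQ HS Hc. unfold normal_bisects.
  set (dQ := dist P Q) in *. set (dS := dist P S) in *.
  assert (EQ : dQ^2 = (fst Q - fst P)^2 + (snd Q - snd P)^2) by (unfold dQ; rewrite dist_sq; ring).
  assert (ES : dS^2 = (fst S - fst P)^2 + (snd S - snd P)^2) by (unfold dS; rewrite dist_sq; ring).
  pose proof (bis_alg (fst P / a^2) (snd P / b^2) ((fst Q - fst P)/dQ) ((snd Q - snd P)/dQ)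
     ((fst S - fst P)/dS) ((snd S - snd P)/dS)) as B.
  assert (U1 : ((fst Q - fst P)/dQ)^2 + ((snd Q - snd P)/dQ)^2 = 1).
  { replace (((fst Q - fst P)/dQ)^2 + ((snd Q - snd P)/dQ)^2) with (((fst Q - fst P)^2 + (snd Q - snd P)^2)/dQ^2) by (field; lra).
    rewrite <- EQ. field; lra. }
  assert (U2 : ((fst S - fst P)/dS)^2 + ((snd S - snd P)/dS)^2 = 1).
  { replace (((fst S - fst P)/dS)^2 + ((snd S - snd P)/dS)^2) with (((fst S - fst P)^2 + (snd S - snd P)^2)/dS^2) by (field; lra).
    rewrite <- ES. field; lra. }
  assert (C : (fst Q - fst P)/dQ * ((snd S - snd P)/dS) - (snd Q - snd P)/dQ * ((fst S - fst P)/dS) <> 0).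
  { replace ((fst Q - fst P)/dQ * ((snd S - snd P)/dS) - (snd Q - snd P)/dQ * ((fst S - fst P)/dS))
      with (cross3 P Q S / (dQ*dS)) by (unfold cross3; field; lra).
    intro H0. apply Hc. 
    apply (Rmult_eq_reg_r (/ (dQ*dS))). rewrite Rmult_0_l. exact H0.
    apply Rinv_neq_0_compat. nra. }
  specialize (B U1 U2 C).
  cbv beta zeta. set (nx := fst P / a^2) in *. set (ny := snd P / b^2) in *.
  replace ((nx * (fst Q - fst P) + ny * (snd Q - snd P)) / dQ)
    with (nx * ((fst Q - fst P)/dQ) + ny * ((snd Q - snd P)/dQ)) by (field; lra).
  replace ((nx * (fst S - fst P) + ny * (snd S - snd P)) / dS)
    with (nx * ((fst S - fst P)/dS) + ny * ((snd S - snd P)/dS)) by (field; lra).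
  rewrite <- B. tauto.
Qed.

Definition Fg (al be : R) (x y : Complex.C) : Complex.C :=
  (x*x + y*y - RtoC be*x*x*y*y - RtoC (2*al)*x*y - RtoC be)%C.

Lemma F_conv a b rho c1 s1 c2 s2 : c1^2+s1^2 = 1 -> c2^2+s2^2 = 1 ->
  Fg (1 - rho*(a^2+b^2)) (rho*(a^2-b^2)) (c1,s1) (c2,s2) =
  (RtoC (-2) * (c1,s1) * (c2,s2) * RtoC (gg c1 s1 c2 s2 - 2*rho*QQ a b c1 s1 c2 s2))%C.
Proof.
  intros H1 H2. unfold Fg, gg, QQ. apply injective_projections; simpl.
  - apply Rminus_diag_uniq.
    transitivity ((1 + a^2*c2^2*rho + a^2*rho*s2^2 - b^2*c2^2*rho - b^2*rho*s2^2 - 2*c2^2)*(c1^2+s1^2-1)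
      + (-1 + a^2*rho - b^2*rho + 2*s1^2)*(c2^2+s2^2-1)).
    field. rewrite H1, H2. ring.
  - apply Rminus_diag_uniq.
    transitivity ((-2*c2*s2)*(c1^2+s1^2-1) + (-2*c1*s1)*(c2^2+s2^2-1)).
    field. rewrite H1, H2. ring.
Qed.

Lemma Cmul_reg (u v : Complex.C) : u <> RtoC 0 -> (u * v)%C = RtoC 0 -> v = RtoC 0.
Proof.
  intros Hu H. replace v with (/u * (u*v))%C by (field; auto). rewrite H. ring.
Qed.

Lemma Csub_ne (u v : Complex.C) : u <> v -> (u - v)%C <> RtoC 0.
Proof. intros H E. apply H. replace u with ((u - v) + v)%C by ring. rewrite E. ring. Qed.

Lemma alg_fwd (al be : R) (z1 z2 z3 : Complex.C) :
  z1 <> z2 -> z1 <> z3 -> z2 <> z3 ->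
  Fg al be z1 z2 = RtoC 0 -> Fg al be z1 z3 = RtoC 0 -> Fg al be z2 z3 = RtoC 0 ->
  (z1+z2+z3 = - RtoC be * (z1*z2*z3))%C /\ (z1*z2+z2*z3+z3*z1 = - RtoC be)%C /\
  (RtoC 1 + RtoC 2 * RtoC al = RtoC be * RtoC be)%C.
Proof.
  intros d12 d13 d23 F12 F13 F23.
  assert (eq1 : ((RtoC 1 - RtoC be*z1*z1)*(z2+z3) - RtoC 2 * RtoC al*z1 = RtoC 0)%C).
  { apply (Cmul_reg (z2 - z3)). apply Csub_ne; auto.
    assert (E : ((z2 - z3) * ((RtoC 1 - RtoC be*z1*z1)*(z2+z3) - RtoC 2 * RtoC al*z1))%C
       = (Fg al be z1 z2 - Fg al be z1 z3)%C) by (unfold Fg; rewrite RtoC_mult; ring).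
    rewrite E, F12, F13. ring. }
  assert (eq2 : ((RtoC 1 - RtoC be*z2*z2)*(z1+z3) - RtoC 2 * RtoC al*z2 = RtoC 0)%C).
  { apply (Cmul_reg (z1 - z3)). apply Csub_ne; auto.
    assert (E : ((z1 - z3) * ((RtoC 1 - RtoC be*z2*z2)*(z1+z3) - RtoC 2 * RtoC al*z2))%C
       = (Fg al be z1 z2 - Fg al be z2 z3)%C) by (unfold Fg; rewrite RtoC_mult; ring).
    rewrite E, F12, F23. ring. }
  assert (eq3 : ((RtoC 1 - RtoC be*z3*z3)*(z1+z2) - RtoC 2 * RtoC al*z3 = RtoC 0)%C).
  { apply (Cmul_reg (z1 - z2)). apply Csub_ne; auto.
    assert (E : ((z1 - z2) * ((RtoC 1 - RtoC be*z3*z3)*(z1+z2) - RtoC 2 * RtoC al*z3))%C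
       = (Fg al be z1 z3 - Fg al be z2 z3)%C) by (unfold Fg; rewrite RtoC_mult; ring).
    rewrite E, F13, F23. ring. }
  assert (K : (RtoC 1 + RtoC be * (z1*z2+z2*z3+z3*z1) + RtoC 2 * RtoC al = RtoC 0)%C).
  { apply (Cmul_reg (z1 - z2)). apply Csub_ne; auto.
    assert (E : ((z1 - z2) * (RtoC 1 + RtoC be * (z1*z2+z2*z3+z3*z1) + RtoC 2 * RtoC al))%C
      = (- (((RtoC 1 - RtoC be*z1*z1)*(z2+z3) - RtoC 2 * RtoC al*z1) -
            ((RtoC 1 - RtoC be*z2*z2)*(z1+z3) - RtoC 2 * RtoC al*z2)))%C) by ring.
    rewrite E, eq1, eq2. ring. }
  assert (A : (z1+z2+z3 + RtoC be * (z1*z2*z3) = RtoC 0)%C).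
  { assert (E : (RtoC 3 * (z1+z2+z3 + RtoC be * (z1*z2*z3)))%C =
      (((RtoC 1 - RtoC be*z1*z1)*(z2+z3) - RtoC 2 * RtoC al*z1) +
       ((RtoC 1 - RtoC be*z2*z2)*(z1+z3) - RtoC 2 * RtoC al*z2) +
       ((RtoC 1 - RtoC be*z3*z3)*(z1+z2) - RtoC 2 * RtoC al*z3) +
       (z1+z2+z3) * (RtoC 1 + RtoC be * (z1*z2+z2*z3+z3*z1) + RtoC 2 * RtoC al))%C).
    { replace (RtoC 3) with (RtoC 1 + RtoC 1 + RtoC 1)%C by (rewrite <- !RtoC_plus; f_equal; ring). ring. }
    rewrite eq1, eq2, eq3, K in E.
    apply (Cmul_reg (RtoC 3)). intro H3. apply RtoC_inj in H3. lra.
    rewrite E. ring. }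
  assert (B : (z1*z2+z2*z3+z3*z1 + RtoC be = RtoC 0)%C).
  { assert (E : (z1*z2+z2*z3+z3*z1 + RtoC be)%C =
      ((z1+z2) * (z1+z2+z3 + RtoC be * (z1*z2*z3)) - z1*z2*(RtoC 1 + RtoC be * (z1*z2+z2*z3+z3*z1) + RtoC 2 * RtoC al) - Fg al be z1 z2)%C)
      by (unfold Fg; rewrite RtoC_mult; ring).
    rewrite E, A, K, F12. ring. }
  split; [|split].
  - replace (z1+z2+z3)%C with ((z1+z2+z3 + RtoC be * (z1*z2*z3)) - RtoC be * (z1*z2*z3))%C by ring.
    rewrite A. ring.
  - replace (z1*z2+z2*z3+z3*z1)%C with ((z1*z2+z2*z3+z3*z1 + RtoC be) - RtoC be)%C by ring.
    rewrite B. ring.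
  - replace (z1*z2+z2*z3+z3*z1)%C with ((z1*z2+z2*z3+z3*z1 + RtoC be) - RtoC be)%C in K by ring.
    rewrite B in K.
    replace (RtoC 1 + RtoC 2 * RtoC al)%C with ((RtoC 1 + RtoC be * (RtoC 0 - RtoC be) + RtoC 2 * RtoC al) + RtoC be * RtoC be)%C by ring.
    rewrite K. ring.
Qed.

Lemma alg_bwd (k : R) (z1 z2 z3 : Complex.C) :
  (z1+z2+z3 = - RtoC k * (z1*z2*z3))%C -> (z1*z2+z2*z3+z3*z1 = - RtoC k)%C ->
  Fg ((k^2-1)/2) k z1 z2 = RtoC 0.
Proof.
  intros He1 He2.
  assert (E : Fg ((k^2-1)/2) k z1 z2 =
    ((z1+z2) * ((z1+z2+z3) + RtoC k * (z1*z2*z3)) - z1*z2*(RtoC 1 + RtoC k * (z1*z2+z2*z3+z3*z1) + RtoC (k^2-1))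
     - ((z1*z2+z2*z3+z3*z1) + RtoC k))%C).
  { unfold Fg. replace (2 * ((k^2-1)/2)) with (k^2-1) by field.
    ring. }
  assert (R2 : RtoC (k^2-1) = (RtoC k * RtoC k - RtoC 1)%C).
  { rewrite <- RtoC_mult, <- RtoC_minus. f_equal. ring. }
  rewrite E, He1, He2, R2. ring.
Qed.

Definition cub (k : R) (sg z : Complex.C) : Complex.C :=
  (z*z*z + RtoC k * sg * z * z - RtoC k * z - sg)%C.

Lemma vieta (k : R) (sg z1 z2 z3 : Complex.C) :
  z1 <> z2 -> z1 <> z3 -> z2 <> z3 ->
  cub k sg z1 = RtoC 0 -> cub k sg z2 = RtoC 0 -> cub k sg z3 = RtoC 0 ->
  (z1+z2+z3 = - RtoC k * sg)%C /\ (z1*z2+z2*z3+z3*z1 = - RtoC k)%C /\ (z1*z2*z3 = sg)%C.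
Proof.
  intros d12 d13 d23 f1 f2 f3.
  assert (Q12 : (z1*z1+z1*z2+z2*z2 + RtoC k * sg*(z1+z2) - RtoC k = RtoC 0)%C).
  { apply (Cmul_reg (z1 - z2)). apply Csub_ne; auto.
    assert (E : ((z1 - z2) * (z1*z1+z1*z2+z2*z2 + RtoC k * sg*(z1+z2) - RtoC k))%C = (cub k sg z1 - cub k sg z2)%C)
      by (unfold cub; ring).
    rewrite E, f1, f2. ring. }
  assert (Q13 : (z1*z1+z1*z3+z3*z3 + RtoC k * sg*(z1+z3) - RtoC k = RtoC 0)%C).
  { apply (Cmul_reg (z1 - z3)). apply Csub_ne; auto.
    assert (E : ((z1 - z3) * (z1*z1+z1*z3+z3*z3 + RtoC k * sg*(z1+z3) - RtoC k))%C = (cub k sg z1 - cub k sg z3)%C)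
      by (unfold cub; ring).
    rewrite E, f1, f3. ring. }
  assert (A : (z1+z2+z3 + RtoC k * sg = RtoC 0)%C).
  { apply (Cmul_reg (z2 - z3)). apply Csub_ne; auto.
    assert (E : ((z2 - z3) * (z1+z2+z3 + RtoC k * sg))%C =
       ((z1*z1+z1*z2+z2*z2 + RtoC k * sg*(z1+z2) - RtoC k) - (z1*z1+z1*z3+z3*z3 + RtoC k * sg*(z1+z3) - RtoC k))%C)
      by ring.
    rewrite E, Q12, Q13. ring. }
  assert (B : (z1*z2+z2*z3+z3*z1 + RtoC k = RtoC 0)%C).
  { assert (E : (z1*z2+z2*z3+z3*z1 + RtoC k)%C =
      ((z1+z2)*(z1+z2+z3 + RtoC k * sg) - (z1*z1+z1*z2+z2*z2 + RtoC k * sg*(z1+z2) - RtoC k))%C) by ring.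
    rewrite E, A, Q12. ring. }
  assert (D : (z1*z2*z3 - sg = RtoC 0)%C).
  { assert (E : (z1*z2*z3 - sg)%C = (cub k sg z1 - (z1+z2+z3 + RtoC k * sg)*z1*z1
       + (z1*z2+z2*z3+z3*z1 + RtoC k)*z1)%C) by (unfold cub; ring).
    rewrite E, f1, A, B. ring. }
  split; [|split].
  - replace (z1+z2+z3)%C with ((z1+z2+z3 + RtoC k * sg) - RtoC k * sg)%C by ring. rewrite A. ring.
  - replace (z1*z2+z2*z3+z3*z1)%C with ((z1*z2+z2*z3+z3*z1 + RtoC k) - RtoC k)%C by ring. rewrite B. ring.
  - replace (z1*z2*z3)%C with ((z1*z2*z3 - sg) + sg)%C by ring. rewrite D. ring.
Qed.

Lemma Cinv_unit c s : c^2+s^2 = 1 -> Cinv (c,s) = (c, -s).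
Proof. intros H. unfold Cinv. simpl.
  replace (c * (c * 1) + s * (s * 1)) with (c^2+s^2) by ring. rewrite H.
  f_equal; field.
Qed.

Definition G (z w : Complex.C) : Complex.C := (RtoC 1 - (z/w + w/z)/RtoC 2)%C.

Lemma G_real c1 s1 c2 s2 : c1^2+s1^2 = 1 -> c2^2+s2^2 = 1 ->
  RtoC (gg c1 s1 c2 s2) = G (c1,s1) (c2,s2).
Proof.
  intros H1 H2. unfold G, Cdiv. rewrite Cinv_unit by auto. rewrite Cinv_unit by auto.
  assert (I2 : Cinv (RtoC 2) = RtoC (/2)).
  { rewrite RtoC_inv. reflexivity. lra. }
  rewrite I2. unfold gg. apply injective_projections; simpl; field.
Qed.

Lemma nagel_cx (k : R) (z1 z2 z3 : Complex.C) :
  z1 <> RtoC 0 -> z2 <> RtoC 0 -> z3 <> RtoC 0 ->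
  (z1+z2+z3 = - RtoC k * (z1*z2*z3))%C -> (z1*z2+z2*z3+z3*z1 = - RtoC k)%C ->
  (G z1 z2 + G z1 z3 + G z2 z3 = (RtoC 9 - RtoC k * RtoC k) / RtoC 2)%C /\
  ((G z1 z2 + G z1 z3 - G z2 z3)*z1 + (G z1 z2 + G z2 z3 - G z1 z3)*z2 + (G z1 z3 + G z2 z3 - G z1 z2)*z3
    = RtoC k * (RtoC 3 + RtoC k * RtoC k) / RtoC 2 * (z1*z2*z3) + RtoC 2 * RtoC k * RtoC k / (z1*z2*z3))%C.
Proof.
  intros n1 n2 n3 He1 He2.
  assert (n123 : (z1*z2*z3)%C <> RtoC 0).
  { intro H. apply Cmul_reg in H; [|intro H'; apply Cmul_reg in H'; auto; apply n2; auto]. auto. }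
  assert (two : RtoC 2 <> RtoC 0) by (intro H; apply RtoC_inj in H; lra).
  split.
  - assert (E : (G z1 z2 + G z1 z3 + G z2 z3 = RtoC 3 - ((z1+z2+z3)*(z1*z2+z2*z3+z3*z1)/(z1*z2*z3) - RtoC 3)/RtoC 2)%C).
    { unfold G. field. repeat split; auto. }
    rewrite E, He1, He2. field. split; auto.
  - assert (E : ((G z1 z2 + G z1 z3 - G z2 z3)*z1 + (G z1 z2 + G z2 z3 - G z1 z3)*z2 + (G z1 z3 + G z2 z3 - G z1 z2)*z3
      = (RtoC 3 - ((z1+z2+z3)*(z1*z2+z2*z3+z3*z1)/(z1*z2*z3) - RtoC 3)/RtoC 2)*(z1+z2+z3) - RtoC 2*(z1+z2+z3)
        + RtoC 2 * ((z1*z2+z2*z3+z3*z1)*(z1*z2+z2*z3+z3*z1) - RtoC 2*(z1+z2+z3)*(z1*z2*z3))/(z1*z2*z3))%C).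
    { unfold G. field. repeat split; auto. }
    rewrite E, He1, He2. field. split; auto.
Qed.

Lemma center_formula (P1 P2 P3 : pt) (s1 s2 s3 : R) :
  dist P2 P3 = s1 -> dist P3 P1 = s2 -> dist P1 P2 = s3 ->
  0 < s1 -> 0 < s2 -> 0 < s3 ->
  center nagel_h P1 P2 P3 =
  (((s2+s3-s1)*fst P1 + (s3+s1-s2)*fst P2 + (s1+s2-s3)*fst P3)/(s1+s2+s3),
   ((s2+s3-s1)*snd P1 + (s3+s1-s2)*snd P2 + (s1+s2-s3)*snd P3)/(s1+s2+s3)).
Proof.
  intros H1 H2 H3 p1 p2 p3. unfold center, nagel_h. cbv zeta. rewrite H1, H2, H3.
  f_equal; field; lra.
Qed.

Lemma Cmult_pair (x1 y1 x2 y2 : R) : ((x1,y1) * (x2,y2))%C = (x1*x2 - y1*y2, x1*y2 + y1*x2).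
Proof. reflexivity. Qed.

Lemma unit_mult (x1 y1 x2 y2 : R) : x1^2+y1^2 = 1 -> x2^2+y2^2 = 1 ->
  (x1*x2 - y1*y2)^2 + (x1*y2 + y1*x2)^2 = 1.
Proof.
  intros H1 H2. replace ((x1*x2 - y1*y2)^2 + (x1*y2 + y1*x2)^2) with ((x1^2+y1^2)*(x2^2+y2^2)) by ring.
  rewrite H1, H2. ring.
Qed.

Lemma unit_nz (c s : R) : c^2+s^2 = 1 -> (c,s) <> RtoC 0.
Proof. intros H E. injection E as E1 E2. subst. lra. Qed.

Lemma core a b k r c1 s1 c2 s2 c3 s3 :
  c1^2+s1^2 = 1 -> c2^2+s2^2 = 1 -> c3^2+s3^2 = 1 ->
  0 < gg c1 s1 c2 s2 -> 0 < gg c1 s1 c3 s3 -> 0 < gg c2 s2 c3 s3 ->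
  0 < r -> 0 <= k < 1 ->
  dist (a*c2, b*s2) (a*c3, b*s3) = gg c2 s2 c3 s3 / r ->
  dist (a*c3, b*s3) (a*c1, b*s1) = gg c1 s1 c3 s3 / r ->
  dist (a*c1, b*s1) (a*c2, b*s2) = gg c1 s1 c2 s2 / r ->
  (((c1,s1)+(c2,s2)+(c3,s3)) = - RtoC k * ((c1,s1)*(c2,s2)*(c3,s3)))%C ->
  (((c1,s1)*(c2,s2)+(c2,s2)*(c3,s3)+(c3,s3)*(c1,s1)) = - RtoC k)%C ->
  exists ce se, ((c1,s1)*(c2,s2)*(c3,s3))%C = (ce,se) /\ ce^2+se^2 = 1 /\
  center nagel_h (a*c1, b*s1) (a*c2, b*s2) (a*c3, b*s3) =
    (a*k*(1+k)/(3-k) * ce, b*k*(1-k)/(3+k) * se).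
Proof.
  intros u1 u2 u3 g12 g13 g23 hr hk d23 d31 d12 He1 He2.
  destruct (nagel_cx k (c1,s1) (c2,s2) (c3,s3) (unit_nz _ _ u1) (unit_nz _ _ u2) (unit_nz _ _ u3) He1 He2)
    as [NW NS].
  rewrite <- !G_real in NW, NS by auto.
  remember ((c1,s1)*(c2,s2)*(c3,s3))%C as E3 eqn:HE3.
  rewrite !Cmult_pair in HE3.
  set (ce := fst E3). set (se := snd E3).
  assert (HE : E3 = (ce, se)) by (destruct E3; reflexivity).
  assert (ue : ce^2+se^2 = 1).
  { unfold ce, se. rewrite HE3. simpl. apply unit_mult; [apply unit_mult|]; auto. }
  exists ce, se. split; [exact HE|]. split; [exact ue|].
  rewrite HE in NS. unfold Cdiv in NS. rewrite (Cinv_unit ce se ue) in NS.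
  assert (W : gg c1 s1 c2 s2 + gg c1 s1 c3 s3 + gg c2 s2 c3 s3 = (9 - k*k)/2).
  { apply (f_equal fst) in NW. simpl in NW.
    match type of NW with ?L = ?R => transitivity R; [rewrite <- NW; ring | field] end. }
  set (w1 := gg c1 s1 c2 s2 + gg c1 s1 c3 s3 - gg c2 s2 c3 s3) in *.
  set (w2 := gg c1 s1 c2 s2 + gg c2 s2 c3 s3 - gg c1 s1 c3 s3) in *.
  set (w3 := gg c1 s1 c3 s3 + gg c2 s2 c3 s3 - gg c1 s1 c2 s2) in *.
  assert (SX : w1*c1 + w2*c2 + w3*c3 = (k*(3+k*k)/2 + 2*k*k)*ce).
  { apply (f_equal fst) in NS. simpl in NS.
    match type of NS with ?L = ?R => transitivity R; [rewrite <- NS; unfold w1, w2, w3; ring | field] end. }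
  assert (SY : w1*s1 + w2*s2 + w3*s3 = (k*(3+k*k)/2 - 2*k*k)*se).
  { apply (f_equal snd) in NS. simpl in NS.
    match type of NS with ?L = ?R => transitivity R; [rewrite <- NS; unfold w1, w2, w3; ring | field] end. }
  rewrite (center_formula _ _ _ (gg c2 s2 c3 s3 / r) (gg c1 s1 c3 s3 / r) (gg c1 s1 c2 s2 / r)); auto;
    try (apply Rdiv_lt_0_compat; auto).
  simpl. f_equal.
  - transitivity (a*(w1*c1+w2*c2+w3*c3)/(gg c1 s1 c2 s2 + gg c1 s1 c3 s3 + gg c2 s2 c3 s3)).
    { unfold w1, w2, w3. field. split; lra. }
    rewrite SX, W. field. lra.
  - transitivity (b*(w1*s1+w2*s2+w3*s3)/(gg c1 s1 c2 s2 + gg c1 s1 c3 s3 + gg c2 s2 c3 s3)).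
    { unfold w1, w2, w3. field. split; lra. }
    rewrite SY, W. field. lra.
Qed.

Definition kk (a b : R) : R := (2 * delta a b - a^2 - b^2)/(a^2 - b^2).

Lemma delta_sq a b : delta a b ^ 2 = a^4 - a^2*b^2 + b^4.
Proof. unfold delta. rewrite pow2_sqrt; [reflexivity|]. nra. Qed.

Lemma delta_pos a b : 0 < b -> 0 <= delta a b.
Proof. intros. unfold delta. apply sqrt_pos. Qed.

Lemma consts a b : 0 < b -> b < a ->
  0 < kk a b < 1 /\ kk a b ^ 2 + 2*(a^2+b^2)*kk a b/(a^2-b^2) = 3 /\
  (b^2 - delta a b)^2 / (a * csq a b) = a * kk a b * (1 + kk a b) / (3 - kk a b) /\
  (a^2 - delta a b)^2 / (b * csq a b) = b * kk a b * (1 - kk a b) / (3 + kk a b).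
Proof.
  intros hb hab.
  pose proof (delta_sq a b) as D2. pose proof (delta_pos a b hb) as D0.
  set (d := delta a b) in *. unfold kk. fold d. unfold csq.
  assert (c2 : 0 < a^2 - b^2) by nra.
  assert (da : d < a^2).
  { assert (0 < b^2*(a^2-b^2)) by (apply Rmult_lt_0_compat; nra).
    assert (d^2 < (a^2)^2) by (rewrite D2; nra).
    destruct (Rlt_or_le d (a^2)); auto. assert ((a^2)^2 <= d^2) by (apply pow_incr; nra). lra. }
  assert (db : b^2 < d).
  { assert (0 < a^2*(a^2-b^2)) by (apply Rmult_lt_0_compat; nra).
    assert ((b^2)^2 < d^2) by (rewrite D2; nra).
    destruct (Rlt_or_le (b^2) d); auto. assert (d^2 <= (b^2)^2) by (apply pow_incr; nra). lra. }
  assert (dab : a^2 + b^2 < 2*d).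
  { assert (0 < (a^2-b^2)^2) by (apply pow_lt_sq; lra).
    assert ((a^2+b^2)^2 < (2*d)^2) by (replace ((2*d)^2) with (4*d^2) by ring; rewrite D2; nra).
    destruct (Rlt_or_le (a^2+b^2) (2*d)); auto. assert ((2*d)^2 <= (a^2+b^2)^2) by (apply pow_incr; nra). lra. }
  split; [|split; [|split]].
  - split; [apply Rdiv_lt_0_compat; lra|].
    apply (Rmult_lt_reg_r (a^2-b^2)); auto. unfold Rdiv. rewrite Rmult_assoc, Rinv_l; lra.
  - apply Rminus_diag_uniq.
    transitivity (4*(d^2 - (a^4 - a^2*b^2 + b^4))/(a^2-b^2)^2).
    field. lra. rewrite D2. field. lra.
  - assert (K : a^2 * (2*d - a^2 - b^2) = (d - b^2)*(2*a^2 - b^2 - d)).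
    { apply Rminus_diag_uniq. transitivity (d^2 - (a^4 - a^2*b^2 + b^4)); [ring | rewrite D2; ring]. }
    assert (a <> 0) by lra.
    replace (1 + (2*d - a^2 - b^2)/(a^2-b^2)) with (2*(d-b^2)/(a^2-b^2)) by (field; lra).
    replace (3 - (2*d - a^2 - b^2)/(a^2-b^2)) with (2*(2*a^2-b^2-d)/(a^2-b^2)) by (field; lra).
    replace (2*d - a^2 - b^2) with ((d - b^2)*(2*a^2 - b^2 - d)/a^2) by (rewrite <- K; field; auto).
    field. repeat split; try lra.
  - assert (K : b^2 * (2*d - a^2 - b^2) = (a^2 - d)*(a^2 - 2*b^2 + d)).
    { apply Rminus_diag_uniq. transitivity (d^2 - (a^4 - a^2*b^2 + b^4)); [ring | rewrite D2; ring]. }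
    assert (b <> 0) by lra.
    replace (1 - (2*d - a^2 - b^2)/(a^2-b^2)) with (2*(a^2-d)/(a^2-b^2)) by (field; lra).
    replace (3 + (2*d - a^2 - b^2)/(a^2-b^2)) with (2*(a^2-2*b^2+d)/(a^2-b^2)) by (field; lra).
    replace (2*d - a^2 - b^2) with ((a^2 - d)*(a^2 - 2*b^2 + d)/b^2) by (rewrite <- K; field; auto).
    field. repeat split; try lra.
Qed.

Lemma ell_param a b P : 0 < a -> 0 < b -> on_ellipse a b P ->
  exists c s, P = (a*c, b*s) /\ c^2 + s^2 = 1.
Proof.
  intros ha hb H. destruct P as [x y]. exists (x/a), (y/b). split.
  - f_equal; field; lra.
  - unfold on_ellipse in H. simpl in H. rewrite <- H. field. lra.
Qed.

Lemma gg_sym c1 s1 c2 s2 : gg c2 s2 c1 s1 = gg c1 s1 c2 s2.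
Proof. unfold gg. ring. Qed.

Lemma dist_sym P Q : dist P Q = dist Q P.
Proof. unfold dist. f_equal. ring. Qed.

Lemma nrm a b c1 s1 c2 s2 : a <> 0 -> b <> 0 -> c1^2+s1^2 = 1 ->
  fst (a*c1, b*s1) / a^2 * (fst (a*c2, b*s2) - fst (a*c1, b*s1)) +
  snd (a*c1, b*s1) / b^2 * (snd (a*c2, b*s2) - snd (a*c1, b*s1)) = - gg c1 s1 c2 s2.
Proof.
  intros ha hb H. cbn [fst snd]. unfold gg.
  replace (a * c1 / a ^ 2 * (a * c2 - a * c1) + b * s1 / b ^ 2 * (b * s2 - b * s1))
    with (c1*c2 + s1*s2 - (c1^2+s1^2)) by (field; auto).
  rewrite H. ring.
Qed.

Lemma dist_scaled a b c1 s1 c2 s2 : c1^2+s1^2 = 1 -> c2^2+s2^2 = 1 ->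
  dist (a*c1, b*s1) (a*c2, b*s2) ^ 2 = 2 * gg c1 s1 c2 s2 * QQ a b c1 s1 c2 s2.
Proof.
  intros H1 H2. rewrite dist_sq. cbn [fst snd]. rewrite <- unitD by auto. ring.
Qed.

Lemma tang g Q r d : d = g / r -> d^2 = 2*g*Q -> 0 < g -> 0 < r -> g - 2*r^2*Q = 0.
Proof.
  intros Hd HD hg hr. subst d.
  assert (E : g * (g - 2*r^2*Q) = r^2 * ((g/r)^2 - 2*g*Q)) by (field; lra).
  rewrite HD in E. replace (2*g*Q - 2*g*Q) with 0 in E by ring.
  rewrite Rmult_0_r in E. apply Rmult_integral in E. destruct E; lra.
Qed.

Lemma pair_ne a b c1 s1 c2 s2 : (a*c1, b*s1) <> (a*c2, b*s2) -> (c1,s1) <> (c2,s2).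
Proof. intros H E. apply H. injection E as -> ->. reflexivity. Qed.

Lemma Fzero a b rho c1 s1 c2 s2 : c1^2+s1^2 = 1 -> c2^2+s2^2 = 1 ->
  gg c1 s1 c2 s2 - 2*rho^2*QQ a b c1 s1 c2 s2 = 0 ->
  Fg (1 - rho^2*(a^2+b^2)) (rho^2*(a^2-b^2)) (c1,s1) (c2,s2) = RtoC 0.
Proof.
  intros H1 H2 H. rewrite F_conv by auto. rewrite H. ring.
Qed.

Lemma cross_sym1 P Q S : cross3 Q S P = cross3 P Q S.
Proof. unfold cross3. ring. Qed.

Lemma fwd a b : 0 < b -> b < a -> forall c1 s1 c2 s2 c3 s3,
  c1^2+s1^2 = 1 -> c2^2+s2^2 = 1 -> c3^2+s3^2 = 1 ->
  three_periodic a b (a*c1, b*s1) (a*c2, b*s2) (a*c3, b*s3) ->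
  on_ellipse ((b^2 - delta a b)^2 / (a * csq a b))
             ((a^2 - delta a b)^2 / (b * csq a b))
             (center nagel_h (a*c1, b*s1) (a*c2, b*s2) (a*c3, b*s3)).
Proof.
  intros hb hab c1 s1 c2 s2 c3 s3 u1 u2 u3 [nd [_ [_ [_ [B1 [B2 B3]]]]]].
  set (P1 := (a*c1, b*s1)) in *. set (P2 := (a*c2, b*s2)) in *. set (P3 := (a*c3, b*s3)) in *.
  assert (ha : a <> 0) by lra. assert (hb' : b <> 0) by lra.
  unfold non_degenerate in nd.
  assert (n12 : P1 <> P2) by (intro E; apply nd; rewrite E; unfold cross3; ring).
  assert (n13 : P1 <> P3) by (intro E; apply nd; rewrite E; unfold cross3; ring).
  assert (n23 : P2 <> P3) by (intro E; apply nd; rewrite E; unfold cross3; ring).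
  assert (q12 := pair_ne _ _ _ _ _ _ n12). assert (q13 := pair_ne _ _ _ _ _ _ n13).
  assert (q23 := pair_ne _ _ _ _ _ _ n23).
  assert (g12 := gg_pos _ _ _ _ u1 u2 q12). assert (g13 := gg_pos _ _ _ _ u1 u3 q13).
  assert (g23 := gg_pos _ _ _ _ u2 u3 q23).
  assert (d12 := dist_pos _ _ n12). assert (d13 := dist_pos _ _ n13). assert (d23 := dist_pos _ _ n23).
  assert (d21 : 0 < dist P2 P1) by (rewrite dist_sym; auto).
  assert (d31 : 0 < dist P3 P1) by (rewrite dist_sym; auto).
  assert (d32 : 0 < dist P3 P2) by (rewrite dist_sym; auto).
  assert (c2' : cross3 P2 P3 P1 <> 0) by (rewrite cross_sym1; auto).
  assert (c3' : cross3 P3 P1 P2 <> 0) by (rewrite cross_sym1; auto).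
  apply (bis_geom a b P1 P2 P3 d12 d13 nd) in B1.
  apply (bis_geom a b P2 P3 P1 d23 d21 c2') in B2.
  apply (bis_geom a b P3 P1 P2 d31 d32 c3') in B3.
  unfold P1, P2, P3 in B1, B2, B3.
  rewrite !nrm in B1, B2, B3 by auto.
  fold P1 P2 P3 in B1, B2, B3.
  rewrite (dist_sym P2 P1), (dist_sym P3 P2), (dist_sym P3 P1) in *.
  rewrite (gg_sym c1 s1 c2 s2), (gg_sym c1 s1 c3 s3), (gg_sym c2 s2 c3 s3) in *.
  set (r := gg c1 s1 c2 s2 / dist P1 P2).
  assert (hr : 0 < r) by (apply Rdiv_lt_0_compat; auto).
  assert (e12 : dist P1 P2 = gg c1 s1 c2 s2 / r) by (unfold r; field; lra).
  assert (h13 : gg c1 s1 c3 s3 / dist P1 P3 = r).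
  { unfold r. replace (gg c1 s1 c3 s3 / dist P1 P3) with (- (- gg c1 s1 c3 s3 / dist P1 P3)) by (field; lra). rewrite <- B1. field. lra. }
  assert (h23 : gg c2 s2 c3 s3 / dist P2 P3 = r).
  { unfold r. replace (gg c2 s2 c3 s3 / dist P2 P3) with (- (- gg c2 s2 c3 s3 / dist P2 P3)) by (field; lra).
    rewrite B2. field. lra. }
  assert (e13 : dist P1 P3 = gg c1 s1 c3 s3 / r) by (rewrite <- h13; field; split; lra).
  assert (e23 : dist P2 P3 = gg c2 s2 c3 s3 / r) by (rewrite <- h23; field; split; lra).
  assert (t12 := tang _ _ _ _ e12 (dist_scaled a b _ _ _ _ u1 u2) g12 hr).
  assert (t13 := tang _ _ _ _ e13 (dist_scaled a b _ _ _ _ u1 u3) g13 hr).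
  assert (t23 := tang _ _ _ _ e23 (dist_scaled a b _ _ _ _ u2 u3) g23 hr).
  apply Fzero in t12; auto. apply Fzero in t13; auto. apply Fzero in t23; auto.
  destruct (alg_fwd _ _ _ _ _ q12 q13 q23 t12 t13 t23) as [E1 [E2 E3]].
  rewrite <- RtoC_mult, <- RtoC_mult, <- RtoC_plus in E3. apply RtoC_inj in E3.
  destruct (consts a b hb hab) as [[k0 k1] [kq [A8 B8]]].
  assert (hc : 0 < a^2 - b^2) by nra.
  assert (bek : r^2*(a^2-b^2) = kk a b).
  { set (be := r^2*(a^2-b^2)) in *. set (k := kk a b) in *.
    assert (Hbe : be^2 + 2*(a^2+b^2)*be/(a^2-b^2) = 3).
    { unfold be. replace (2*(a^2+b^2)*(r^2*(a^2-b^2))/(a^2-b^2)) with (2*r^2*(a^2+b^2)) by (field; lra).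
      unfold be in E3. nra. }
    assert (F : (be - k)*(be + k + 2*(a^2+b^2)/(a^2-b^2)) = 0).
    { replace ((be - k)*(be + k + 2*(a^2+b^2)/(a^2-b^2))) with
        ((be^2 + 2*(a^2+b^2)*be/(a^2-b^2)) - (k^2 + 2*(a^2+b^2)*k/(a^2-b^2))) by (field; lra).
      rewrite Hbe, kq. ring. }
    apply Rmult_integral in F. destruct F as [F|F]; [lra|].
    exfalso. assert (0 < be) by (unfold be; apply Rmult_lt_0_compat; nra).
    assert (0 < 2*(a^2+b^2)/(a^2-b^2)) by (apply Rdiv_lt_0_compat; nra). lra. }
  rewrite bek in E1, E2.
  rewrite (dist_sym P1 P3) in e13.
  destruct (core a b (kk a b) r c1 s1 c2 s2 c3 s3 u1 u2 u3 g12 g13 g23 hr ltac:(lra) e23 e13 e12 E1 E2)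
    as [ce [se [_ [ue HC]]]].
  fold P1 P2 P3 in HC. rewrite HC, A8, B8. unfold on_ellipse. cbn [fst snd].
  assert (0 < 3 - kk a b) by lra. assert (0 < 3 + kk a b) by lra.
  assert (0 < a * kk a b * (1 + kk a b) / (3 - kk a b)).
  { apply Rdiv_lt_0_compat; auto. apply Rmult_lt_0_compat; [apply Rmult_lt_0_compat|]; lra. }
  assert (0 < b * kk a b * (1 - kk a b) / (3 + kk a b)).
  { apply Rdiv_lt_0_compat; auto. apply Rmult_lt_0_compat; [apply Rmult_lt_0_compat|]; lra. }
  rewrite <- ue. field. split; lra.
Qed.

Definition Ecx (x : R) : Complex.C := (cos x, sin x).

Lemma Eunit x : cos x ^ 2 + sin x ^ 2 = 1.
Proof. pose proof (sin2_cos2 x). unfold Rsqr in H. nra. Qed.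

Lemma Eadd x y : Ecx (x+y) = (Ecx x * Ecx y)%C.
Proof. unfold Ecx. rewrite Cmult_pair, cos_plus, sin_plus. f_equal; ring. Qed.

Lemma Eneg x : Ecx (-x) = (/ Ecx x)%C.
Proof. unfold Ecx. rewrite Cinv_unit by apply Eunit. rewrite cos_neg, sin_neg. reflexivity. Qed.

Lemma Enz x : Ecx x <> RtoC 0.
Proof. apply unit_nz. apply Eunit. Qed.

Lemma Esin x : (Ci * RtoC 2 * RtoC (sin x))%C = (Ecx x - Ecx (-x))%C.
Proof.
  unfold Ecx. rewrite cos_neg, sin_neg. apply injective_projections; simpl; ring.
Qed.

Lemma cub_root k psi phi : sin (3*phi - 2*psi) + k * sin phi = 0 ->
  cub k (Ecx psi) (Ecx (2*phi - psi)) = RtoC 0.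
Proof.
  intro H.
  assert (H2 : (Ci * RtoC 2 * RtoC (sin (3*phi - 2*psi)) + RtoC k * (Ci * RtoC 2 * RtoC (sin phi)))%C = RtoC 0).
  { replace (Ci * RtoC 2 * RtoC (sin (3*phi - 2*psi)) + RtoC k * (Ci * RtoC 2 * RtoC (sin phi)))%C
      with (Ci * RtoC 2 * RtoC (sin (3*phi - 2*psi) + k * sin phi))%C
      by (rewrite RtoC_plus, RtoC_mult; ring).
    rewrite H. ring. }
  rewrite !Esin in H2.
  replace (3*phi - 2*psi) with (phi + phi + phi + (-psi) + (-psi)) in H2 by ring.
  replace (- (phi + phi + phi + (-psi) + (-psi))) with ((-phi) + (-phi) + (-phi) + psi + psi) in H2 by ring.
  replace (2*phi - psi) with (phi + phi + (-psi)) by ring.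
  rewrite !Eadd, !Eneg in *.
  set (u := Ecx phi) in *. set (v := Ecx psi) in *.
  assert (nu : u <> RtoC 0) by apply Enz. assert (nv : v <> RtoC 0) by apply Enz.
  assert (E : cub k v (u*u*/v) = (u*u*u*/v * (u*u*u*/v*/v - /u*/u*/u*v*v + RtoC k*(u - /u)))%C).
  { unfold cub. field. auto. }
  rewrite E. rewrite H2. ring.
Qed.

Lemma angle sx sy : sx^2 + sy^2 = 1 -> exists psi, cos psi = sx /\ sin psi = sy.
Proof.
  intro H. assert (Hb : -1 <= sx <= 1) by nra.
  assert (Hs : sqrt (1 - sx²) = Rabs sy).
  { replace (1 - sx²) with (sy²) by (unfold Rsqr; nra). apply sqrt_Rsqr_abs. }
  destruct (Rle_dec 0 sy) as [Hy|Hy].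
  - exists (acos sx). split. apply cos_acos; auto. rewrite sin_acos, Hs by auto. apply Rabs_right; lra.
  - exists (- acos sx). split. rewrite cos_neg. apply cos_acos; auto.
    rewrite sin_neg, sin_acos, Hs by auto. rewrite Rabs_left; lra.
Qed.

Lemma E_ne x d : 0 < d < 2*PI -> Ecx (x + d) <> Ecx x.
Proof.
  intros Hd E. unfold Ecx in E. injection E as E1 E2.
  assert (C : cos d = 1).
  { replace d with ((x+d) - x) by ring. rewrite cos_minus, E1, E2. pose proof (Eunit x). nra. }
  replace d with (2*(d/2)) in C by field. rewrite cos_2a_sin in C.
  assert (0 < sin (d/2)) by (apply sin_gt_0; lra). nra.
Qed.

Definition hf (k psi : R) (p : R) : R := sin (3*p - 2*psi) + k * sin p.

Lemma hf_cont k psi : continuity (hf k psi).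
Proof. unfold hf. reg. Qed.

Lemma root_in k psi x y : x < y -> hf k psi x * hf k psi y < 0 ->
  exists z, x < z < y /\ hf k psi z = 0.
Proof.
  intros Hxy Hp.
  destruct (IVT_cor (hf k psi) x y (hf_cont k psi) ltac:(lra) ltac:(lra)) as [z [[h1 h2] hz]].
  exists z. split; auto. split.
  - destruct h1 as [h1|h1]; auto. subst. rewrite hz in Hp. lra.
  - destruct h2 as [h2|h2]; auto. subst. rewrite hz in Hp. lra.
Qed.

Lemma hf_vals k psi : 0 <= k < 1 ->
  let p0 := (PI/2 + 2*psi)/3 in
  0 < hf k psi p0 /\ hf k psi (p0 + PI/3) < 0 /\ 0 < hf k psi (p0 + 2*PI/3) /\ hf k psi (p0 + PI) < 0.
Proof.
  intros Hk p0. unfold hf.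
  assert (B : forall t, -1 <= sin t <= 1) by (intro t; apply SIN_bound).
  replace (3*p0 - 2*psi) with (PI/2) by (unfold p0; field).
  replace (3*(p0 + PI/3) - 2*psi) with (PI/2 + PI) by (unfold p0; field).
  replace (3*(p0 + 2*PI/3) - 2*psi) with (PI/2 + PI + PI) by (unfold p0; field).
  replace (3*(p0 + PI) - 2*psi) with (PI/2 + PI + PI + PI) by (unfold p0; field).
  rewrite !neg_sin, sin_PI2.
  pose proof (B p0). pose proof (B (p0 + PI/3)). pose proof (B (p0 + 2*PI/3)). pose proof (B (p0 + PI)).
  repeat split; nra.
Qed.

Lemma cross_unit c1 s1 c2 s2 c3 s3 : c1^2+s1^2 = 1 -> c2^2+s2^2 = 1 -> c3^2+s3^2 = 1 ->
  ((c2-c1)*(s3-s1) - (s2-s1)*(c3-c1))^2 = 2 * gg c1 s1 c2 s2 * gg c1 s1 c3 s3 * gg c2 s2 c3 s3.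
Proof.
  intros H1 H2 H3. unfold gg. apply Rminus_diag_uniq.
  transitivity ((-2*c2*c3 + 2*c2*c3*s2*s3 + 2*c2^2*c3^2 - 2*s2*s3 + s2^2 + s3^2)*(c1^2+s1^2-1)
    + (-2*c1*c3 + 2*c1*c3*s1*s3 + 2*c3^2 - 2*c3^2*s1^2 - 2*s1*s3 + s1^2 + s3^2)*(c2^2+s2^2-1)
    + (2 - 2*c1*c2 + 2*c1*c2*s1*s2 - 2*s1*s2 - s1^2 + 2*s1^2*s2^2 - s2^2)*(c3^2+s3^2-1)).
  ring. rewrite H1, H2, H3. ring.
Qed.

Lemma Cmul_nz (u v : Complex.C) : u <> RtoC 0 -> v <> RtoC 0 -> (u*v)%C <> RtoC 0.
Proof. intros Hu Hv E. apply Hv. apply (Cmul_reg u); auto. Qed.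

Lemma dist_from a b rho c1 s1 c2 s2 : c1^2+s1^2 = 1 -> c2^2+s2^2 = 1 -> 0 < rho ->
  0 < gg c1 s1 c2 s2 -> gg c1 s1 c2 s2 - 2*rho*QQ a b c1 s1 c2 s2 = 0 ->
  dist (a*c1, b*s1) (a*c2, b*s2) = gg c1 s1 c2 s2 / sqrt rho.
Proof.
  intros H1 H2 hr hg H.
  pose proof (dist_scaled a b _ _ _ _ H1 H2) as D.
  set (g := gg c1 s1 c2 s2) in *. set (Q := QQ a b c1 s1 c2 s2) in *.
  set (d := dist (a*c1, b*s1) (a*c2, b*s2)) in *.
  assert (sr : 0 < sqrt rho) by (apply sqrt_lt_R0; auto).
  assert (srr : sqrt rho ^ 2 = rho) by (rewrite pow2_sqrt; lra).
  assert (d0 : 0 <= d) by (unfold d, dist; apply sqrt_pos).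
  assert (y0 : 0 < g / sqrt rho) by (apply Rdiv_lt_0_compat; auto).
  assert (Eq : d^2 = (g/sqrt rho)^2).
  { rewrite D. replace Q with (g/(2*rho)) by (field_simplify_eq; lra).
    replace ((g/sqrt rho)^2) with (g^2/(sqrt rho^2)) by (field; lra). rewrite srr. field. lra. }
  nra.
Qed.

Lemma cub_E k psi phi : hf k psi phi = 0 -> cub k (Ecx psi) (Ecx (2*phi - psi)) = RtoC 0.
Proof. intro H. apply cub_root. exact H. Qed.

Lemma bwd a b : 0 < b -> b < a -> forall X : pt,
  on_ellipse ((b^2 - delta a b)^2 / (a * csq a b))
             ((a^2 - delta a b)^2 / (b * csq a b)) X -> locus a b nagel_h X.
Proof.
  intros hb hab X HX.
  destruct (consts a b hb hab) as [[k0 k1] [kq [A8 B8]]].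
  rewrite A8, B8 in HX. set (k := kk a b) in *.
  set (A := a * k * (1 + k) / (3 - k)) in *. set (B := b * k * (1 - k) / (3 + k)) in *.
  assert (hA : 0 < A).
  { unfold A. apply Rdiv_lt_0_compat; [|lra]. apply Rmult_lt_0_compat; [apply Rmult_lt_0_compat|]; lra. }
  assert (hB : 0 < B).
  { unfold B. apply Rdiv_lt_0_compat; [|lra]. apply Rmult_lt_0_compat; [apply Rmult_lt_0_compat|]; lra. }
  destruct X as [x y]. unfold on_ellipse in HX. cbn [fst snd] in HX.
  assert (us : (x/A)^2 + (y/B)^2 = 1) by (rewrite <- HX; field; lra).
  destruct (angle _ _ us) as [psi [cp sp]].
  destruct (hf_vals k psi ltac:(lra)) as [v0 [v1 [v2 v3]]].
  set (p0 := (PI/2 + 2*psi)/3) in *.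
  assert (PIp := PI_RGT_0).
  destruct (root_in k psi p0 (p0 + PI/3) ltac:(lra) ltac:(nra)) as [pa [[ia ia'] ha]].
  destruct (root_in k psi (p0 + PI/3) (p0 + 2*PI/3) ltac:(lra) ltac:(nra)) as [pb [[ib ib'] hbb]].
  destruct (root_in k psi (p0 + 2*PI/3) (p0 + PI) ltac:(lra) ltac:(nra)) as [pc [[ic ic'] hc]].
  pose proof (cub_E _ _ _ ha) as fa. pose proof (cub_E _ _ _ hbb) as fb. pose proof (cub_E _ _ _ hc) as fc.
  assert (dab : Ecx (2*pa - psi) <> Ecx (2*pb - psi)).
  { intro E. apply (E_ne (2*pa - psi) (2*(pb - pa))). lra.
    replace (2*pa - psi + 2*(pb - pa)) with (2*pb - psi) by ring. auto. }
  assert (dac : Ecx (2*pa - psi) <> Ecx (2*pc - psi)).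
  { intro E. apply (E_ne (2*pa - psi) (2*(pc - pa))). lra.
    replace (2*pa - psi + 2*(pc - pa)) with (2*pc - psi) by ring. auto. }
  assert (dbc : Ecx (2*pb - psi) <> Ecx (2*pc - psi)).
  { intro E. apply (E_ne (2*pb - psi) (2*(pc - pb))). lra.
    replace (2*pb - psi + 2*(pc - pb)) with (2*pc - psi) by ring. auto. }
  destruct (vieta _ _ _ _ _ dab dac dbc fa fb fc) as [E1 [E2 E3]].
  unfold Ecx in *.
  set (c1 := cos (2*pa - psi)) in *. set (s1 := sin (2*pa - psi)) in *.
  set (c2 := cos (2*pb - psi)) in *. set (s2 := sin (2*pb - psi)) in *.
  set (c3 := cos (2*pc - psi)) in *. set (s3 := sin (2*pc - psi)) in *.
  assert (u1 : c1^2+s1^2 = 1) by apply Eunit.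
  assert (u2 : c2^2+s2^2 = 1) by apply Eunit.
  assert (u3 : c3^2+s3^2 = 1) by apply Eunit.
  set (z1 := (c1,s1)) in *. set (z2 := (c2,s2)) in *. set (z3 := (c3,s3)) in *.
  assert (E1' : (z1+z2+z3 = - RtoC k * (z1*z2*z3))%C) by (rewrite E3; exact E1).
  assert (F12 := alg_bwd k z1 z2 z3 E1' E2).
  assert (F13 : Fg ((k^2-1)/2) k z1 z3 = RtoC 0).
  { apply (alg_bwd k z1 z3 z2).
    - replace (z1+z3+z2)%C with (z1+z2+z3)%C by ring. rewrite E1'. ring.
    - replace (z1*z3+z3*z2+z2*z1)%C with (z1*z2+z2*z3+z3*z1)%C by ring. exact E2. }
  assert (F23 : Fg ((k^2-1)/2) k z2 z3 = RtoC 0).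
  { apply (alg_bwd k z2 z3 z1).
    - replace (z2+z3+z1)%C with (z1+z2+z3)%C by ring. rewrite E1'. ring.
    - replace (z2*z3+z3*z1+z1*z2)%C with (z1*z2+z2*z3+z3*z1)%C by ring. exact E2. }
  assert (hcc : 0 < a^2 - b^2) by nra.
  set (rho := k/(a^2-b^2)).
  assert (hrho : 0 < rho) by (unfold rho; apply Rdiv_lt_0_compat; lra).
  assert (al_eq : 1 - rho*(a^2+b^2) = (k^2-1)/2).
  { unfold rho. replace (k/(a^2-b^2)*(a^2+b^2)) with (2*(a^2+b^2)*k/(a^2-b^2)/2) by (field; lra).
    replace (2*(a^2+b^2)*k/(a^2-b^2)) with (3 - k^2) by lra. field. }
  assert (be_eq : rho*(a^2-b^2) = k) by (unfold rho; field; lra).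
  assert (nz : forall c s c' s', c^2+s^2 = 1 -> c'^2+s'^2 = 1 ->
     Fg ((k^2-1)/2) k (c,s) (c',s') = RtoC 0 -> gg c s c' s' - 2*rho*QQ a b c s c' s' = 0).
  { intros c s c' s' h h' F. rewrite <- al_eq, <- be_eq in F. rewrite F_conv in F by auto.
    apply Cmul_reg in F.
    - apply RtoC_inj in F. exact F.
    - apply Cmul_nz; [apply Cmul_nz|]; [| apply unit_nz; auto | apply unit_nz; auto].
      intro H0. apply RtoC_inj in H0. lra. }
  assert (t12 := nz _ _ _ _ u1 u2 F12). assert (t13 := nz _ _ _ _ u1 u3 F13).
  assert (t23 := nz _ _ _ _ u2 u3 F23).
  assert (g12 := gg_pos _ _ _ _ u1 u2 dab). assert (g13 := gg_pos _ _ _ _ u1 u3 dac).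
  assert (g23 := gg_pos _ _ _ _ u2 u3 dbc).
  assert (d12 := dist_from a b _ _ _ _ _ u1 u2 hrho g12 t12).
  assert (d13 := dist_from a b _ _ _ _ _ u1 u3 hrho g13 t13).
  assert (d23 := dist_from a b _ _ _ _ _ u2 u3 hrho g23 t23).
  set (r := sqrt rho) in *.
  assert (hr : 0 < r) by (apply sqrt_lt_R0; auto).
  set (P1 := (a*c1, b*s1)) in *. set (P2 := (a*c2, b*s2)) in *. set (P3 := (a*c3, b*s3)) in *.
  assert (ha0 : a <> 0) by lra. assert (hb' : b <> 0) by lra.
  assert (cr : cross3 P1 P2 P3 <> 0).
  { replace (cross3 P1 P2 P3) with (a*b*((c2-c1)*(s3-s1) - (s2-s1)*(c3-c1))) by (unfold cross3, P1, P2, P3; simpl; ring).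
    pose proof (cross_unit _ _ _ _ _ _ u1 u2 u3) as CU.
    assert (0 < gg c1 s1 c2 s2 * gg c1 s1 c3 s3 * gg c2 s2 c3 s3) by (apply Rmult_lt_0_compat; [apply Rmult_lt_0_compat|]; auto).
    intro H0. apply Rmult_integral in H0. destruct H0 as [H0|H0].
    - apply Rmult_integral in H0. destruct H0; lra.
    - rewrite H0 in CU. nra. }
  assert (p12 : 0 < dist P1 P2) by (rewrite d12; apply Rdiv_lt_0_compat; auto).
  assert (p13 : 0 < dist P1 P3) by (rewrite d13; apply Rdiv_lt_0_compat; auto).
  assert (p23 : 0 < dist P2 P3) by (rewrite d23; apply Rdiv_lt_0_compat; auto).
  assert (p21 : 0 < dist P2 P1) by (rewrite dist_sym; auto).
  assert (p31 : 0 < dist P3 P1) by (rewrite dist_sym; auto).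
  assert (p32 : 0 < dist P3 P2) by (rewrite dist_sym; auto).
  assert (c2' : cross3 P2 P3 P1 <> 0) by (rewrite cross_sym1; auto).
  assert (c3' : cross3 P3 P1 P2 <> 0) by (rewrite cross_sym1; auto).
  exists P1, P2, P3. split.
  - unfold three_periodic. split; [exact cr|].
    assert (oe : forall c s, c^2+s^2 = 1 -> on_ellipse a b (a*c, b*s)).
    { intros c s h. unfold on_ellipse. cbn [fst snd]. rewrite <- h. field. split; auto. }
    split; [apply oe; auto|]. split; [apply oe; auto|]. split; [apply oe; auto|].
    split; [|split].
    + apply (bis_geom a b P1 P2 P3 p12 p13 cr). unfold P1, P2, P3. rewrite !nrm by auto.
      fold P1 P2 P3. rewrite d12, d13. field. split; lra.
    + apply (bis_geom a b P2 P3 P1 p23 p21 c2'). unfold P1, P2, P3. rewrite !nrm by auto.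
      fold P1 P2 P3. rewrite (dist_sym P2 P1), d23, d12, (gg_sym c1 s1 c2 s2). field. split; lra.
    + apply (bis_geom a b P3 P1 P2 p31 p32 c3'). unfold P1, P2, P3. rewrite !nrm by auto.
      fold P1 P2 P3. rewrite (dist_sym P3 P1), (dist_sym P3 P2), d13, d23, (gg_sym c1 s1 c3 s3), (gg_sym c2 s2 c3 s3). field. split; lra.
  - assert (d31 : dist P3 P1 = gg c1 s1 c3 s3 / r) by (rewrite dist_sym; exact d13).
    destruct (core a b k r c1 s1 c2 s2 c3 s3 u1 u2 u3 g12 g13 g23 hr ltac:(lra) d23 d31 d12 E1' E2)
      as [ce [se [Hce [_ HC]]]].
    fold P1 P2 P3 in HC. rewrite HC. fold A B.
    fold z1 z2 z3 in Hce. rewrite E3 in Hce. injection Hce as Hc Hs.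
    rewrite <- Hc, <- Hs, cp, sp. f_equal; field; lra.
Qed.

Theorem theorem1 (a b : R) (hb : 0 < b) (hab : b < a) (X : pt) :
  locus a b nagel_h X <->
  on_ellipse ((b^2 - delta a b)^2 / (a * csq a b))
             ((a^2 - delta a b)^2 / (b * csq a b)) X.
Proof.
  split.
  - intros [P1 [P2 [P3 [TP HC]]]]. subst X.
    assert (ha : 0 < a) by lra.
    destruct TP as [nd [o1 [o2 [o3 rest]]]].
    destruct (ell_param a b P1 ha hb o1) as [c1 [s1 [-> u1]]].
    destruct (ell_param a b P2 ha hb o2) as [c2 [s2 [-> u2]]].
    destruct (ell_param a b P3 ha hb o3) as [c3 [s3 [-> u3]]].
    apply fwd; auto. repeat split; auto; apply rest.
  - apply bwd; auto.
Qed.
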